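(* Let $G=\langle b\rangle\wr\langle a\rangle$ be the restricted wreath product with $\langle a\rangle\cong\langle b\rangle\cong\mathbb Z$. Then the bijection $$f\colon\{\,a^n\mid n\in\mathbb N\,\}\to\mathbb N,\quad a^n\mapsto n$$ is an interpretation of $(\mathbb N,+,\times)$ in the group $(G,\cdot)$ with parameters.
   Context: The restricted wreath product $\langle b\rangle\wr\langle a\rangle$ means: the elements $a^{-k}ba^k$, $k\in\mathbb Z$, generate a free abelian group $H$ with basis $(a^{-k}ba^k)_{k\in\mathbb Z}$, and the group generated by $a,b$ is $H\rtimes\langle a\rangle$. An interpretation with parameters of $M$ in $N$ is a pair $(n,f)$, $f$ a surjection from a subset of $N^n$ onto $M$, such that the preimage under $f$ (applied coordinatewise) of every set definable without parameters in $M$ is first-order definable in $N$ with parameters from $N$. *)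

(* Defs.v *)
From Stdlib Require Import List Arith ZArith Lia.
Import ListNotations.
Set Implicit Arguments.

Inductive term (F : Type) : Type :=
| Var : nat -> term F
| App : F -> term F -> term F -> term F.
Arguments Var {F} _.

(* First-order formulas with equality; connectives not, and, exists
   (the others are abbreviations). Variables are named by nat. *)
Inductive form (F : Type) : Type :=
| FEq : term F -> term F -> form F
| FNot : form F -> form F
| FAnd : form F -> form F -> form F
| FEx : nat -> form F -> form F.

Fixpoint eval_term {F D : Type} (op : F -> D -> D -> D) (rho : nat -> D)
  (t : term F) : D :=
  match t with
  | Var i => rho i
  | App f t1 t2 => op f (eval_term op rho t1) (eval_term op rho t2)
  end.

Definition upd {D : Type} (rho : nat -> D) (i : nat) (d : D) : nat -> D :=
  fun j => if Nat.eqb j i then d else rho j.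

Fixpoint sat {F D : Type} (op : F -> D -> D -> D) (rho : nat -> D)
  (phi : form F) : Prop :=
  match phi with
  | FEq t1 t2 => eval_term op rho t1 = eval_term op rho t2
  | FNot p => ~ sat op rho p
  | FAnd p q => sat op rho p /\ sat op rho q
  | FEx i p => exists d : D, sat op (upd rho i d) p
  end.

Fixpoint fv_term {F : Type} (t : term F) : list nat :=
  match t with
  | Var i => [i]
  | App _ t1 t2 => fv_term t1 ++ fv_term t2
  end.

Fixpoint fv_form {F : Type} (phi : form F) : list nat :=
  match phi with
  | FEq t1 t2 => fv_term t1 ++ fv_term t2
  | FNot p => fv_form p
  | FAnd p q => fv_form p ++ fv_form q
  | FEx i p => filter (fun j => negb (Nat.eqb j i)) (fv_form p)
  end.

(* Environment assigning xs_i to the variable x_i (d0 is an irrelevant default). *)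
Definition list_env {D : Type} (d0 : D) (xs : list D) : nat -> D :=
  fun i => nth i xs d0.

Definition definable0 {F D : Type} (op : F -> D -> D -> D) (d0 : D)
  (k : nat) (X : list D -> Prop) : Prop :=
  exists phi : form F,
    (forall i, In i (fv_form phi) -> i < k) /\
    forall xs : list D, length xs = k -> (X xs <-> sat op (list_env d0 xs) phi).

(* X ⊆ D^k is definable with parameters ps from D: the parameters are
   plugged into the variables x_k,...,x_{k+|ps|-1}. *)
Definition definable_params {F D : Type} (op : F -> D -> D -> D) (d0 : D)
  (k : nat) (X : list D -> Prop) : Prop :=
  exists (phi : form F) (ps : list D),
    (forall i, In i (fv_form phi) -> i < k + length ps) /\
    forall xs : list D, length xs = k ->
      (X xs <-> sat op (list_env d0 (xs ++ ps)) phi).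

(* Split a list into k consecutive blocks of length n (an element of
   (N^n)^k viewed as an element of N^(n*k)). *)
Fixpoint chunks {A : Type} (n k : nat) (ys : list A) : list (list A) :=
  match k with
  | 0 => []
  | S k' => firstn n ys :: chunks n k' (skipn n ys)
  end.

(* (n, f) is an interpretation with parameters of M = (DM, opM) in
   N = (DN, opN): f is a surjection from dom ⊆ DN^n onto DM, and for every
   k and every X ⊆ DM^k definable without parameters in M, the coordinatewise
   preimage f^{-1}(X) ⊆ DN^(n*k) is definable in N with parameters from N. *)
Definition is_interpretation {FM DM FN DN : Type}
  (opM : FM -> DM -> DM -> DM) (dM : DM)
  (opN : FN -> DN -> DN -> DN) (dN : DN)
  (n : nat) (dom : list DN -> Prop) (f : list DN -> DM) : Prop :=
  (forall m : DM, exists ys : list DN, length ys = n /\ dom ys /\ f ys = m) /\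
  forall (k : nat) (X : list DM -> Prop),
    definable0 opM dM k X ->
    definable_params opN dN (n * k)
      (fun ys => Forall dom (chunks n k ys) /\ X (map f (chunks n k ys))).

Inductive arith_sym : Type := Plus | Times.
Definition arith_op (s : arith_sym) : nat -> nat -> nat :=
  match s with Plus => Nat.add | Times => Nat.mul end.

(* Elements: pairs (h, s) with h : Z -> Z finitely supported and s : Z;
   product (h1,s1)(h2,s2) = (h1 + h2(. - s1), s1 + s2). *)
Record WZ : Type := mkWZ {
  lamp : Z -> Z ;
  shift : Z ;
  lamp_fin : exists l : list Z, forall i, lamp i <> 0%Z -> In i l
}.

Lemma wmul_fin (g1 g2 : WZ) :
  exists l : list Z, forall i,
    (lamp g1 i + lamp g2 (i - shift g1))%Z <> 0%Z -> In i l.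
Proof.
  destruct (lamp_fin g1) as [l1 H1]. destruct (lamp_fin g2) as [l2 H2].
  exists (l1 ++ map (fun j => (j + shift g1)%Z) l2).
  intros i Hi. apply in_or_app.
  destruct (Z.eq_dec (lamp g1 i) 0%Z) as [E|E].
  - right. rewrite E in Hi. simpl in Hi.
    apply in_map_iff. exists (i - shift g1)%Z. split; [lia|].
    apply H2. exact Hi.
  - left. apply H1. exact E.
Qed.

Definition wmul (g1 g2 : WZ) : WZ :=
  mkWZ (fun i => (lamp g1 i + lamp g2 (i - shift g1))%Z)
       (shift g1 + shift g2)%Z (wmul_fin g1 g2).

Lemma zero_fin : exists l : list Z, forall i : Z, (fun _ : Z => 0%Z) i <> 0%Z -> In i l.
Proof. exists []. intros i H. exfalso. apply H. reflexivity. Qed.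

Lemma delta_fin : exists l : list Z, forall i : Z,
  (fun j : Z => if Z.eqb j 0 then 1%Z else 0%Z) i <> 0%Z -> In i l.
Proof.
  exists [0%Z]. intros i H. simpl in H. destruct (Z.eqb_spec i 0).
  - left. symmetry. assumption.
  - exfalso. apply H. reflexivity.
Qed.

Definition wone : WZ := mkWZ (fun _ => 0%Z) 0%Z zero_fin.
Definition wa : WZ := mkWZ (fun _ => 0%Z) 1%Z zero_fin.
Definition wb : WZ := mkWZ (fun j => if Z.eqb j 0 then 1%Z else 0%Z) 0%Z delta_fin.

Inductive grp_sym : Type := Mul.
Definition grp_op (s : grp_sym) : WZ -> WZ -> WZ :=
  match s with Mul => wmul end.

Definition wpow (g : WZ) (n : nat) : WZ := Nat.iter n (wmul g) wone.

Definition f_apow (gs : list WZ) : nat := Z.to_nat (shift (hd wone gs)).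
Definition dom_apow (gs : list WZ) : Prop := exists n : nat, gs = [wpow wa n].

(* Main.v *)
Require Import Defs.
From Stdlib Require Import List Arith ZArith.
From Stdlib Require Import Lia Znumtheory Classical ClassicalEpsilon FunctionalExtensionality ProofIrrelevance.
Import ListNotations.
Local Notation shift := Defs.shift.

Open Scope Z_scope.
Definition S4 (n : Z) := exists a b c d : Z, n = a*a+b*b+c*c+d*d.

Lemma S4_mul x y : S4 x -> S4 y -> S4 (x*y).
Proof.
  intros (a&b&c&d&->) (e&f&g&h&->).
  exists (a*e+b*f+c*g+d*h), (a*f-b*e+c*h-d*g), (a*g-b*h-c*e+d*f), (a*h+b*g-c*f-d*e).
  ring.
Qed.

Lemma centered x m : 0 < m -> exists y k, x = y + m*k /\ 4*(y*y) <= m*m.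
Proof.
  intros Hm. pose proof (Z.mod_pos_bound x m Hm). pose proof (Z.div_mod x m ltac:(lia)).
  destruct (Z_le_gt_dec (2*(x mod m)) m).
  - exists (x mod m), (x/m). split; [lia|nia].
  - exists (x mod m - m), (x/m + 1). split; [lia|nia].
Qed.

Lemma div_lt_prime p m : prime p -> 1 < m < p -> ~ (m | p).
Proof.
  intros Hp Hm Hd. destruct (prime_divisors p Hp m Hd) as [H|[H|[H|H]]]; lia.
Qed.

Lemma descent p : prime p -> forall (N:nat) m, 0 < m -> (Z.to_nat m <= N)%nat -> m < p -> S4 (m*p) -> S4 p.
Proof.
  intros Hp N. induction N as [|N IH]; intros m Hm0 HN Hmp HS; [lia|].
  destruct (Z.eq_dec m 1) as [->|Hm1]; [rewrite Z.mul_1_l in HS; exact HS|].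
  destruct HS as (x1&x2&x3&x4&Hx).
  destruct (centered x1 m Hm0) as (y1&k1&E1&B1).
  destruct (centered x2 m Hm0) as (y2&k2&E2&B2).
  destruct (centered x3 m Hm0) as (y3&k3&E3&B3).
  destruct (centered x4 m Hm0) as (y4&k4&E4&B4).
  set (r := p - (2*(x1*k1+x2*k2+x3*k3+x4*k4) - m*(k1*k1+k2*k2+k3*k3+k4*k4))).
  assert (Hr : m * r = y1*y1+y2*y2+y3*y3+y4*y4).
  { unfold r. subst x1 x2 x3 x4. lia. }
  assert (Hsq : 0 <= y1*y1+y2*y2+y3*y3+y4*y4) by (pose proof (Z.square_nonneg y1); pose proof (Z.square_nonneg y2); pose proof (Z.square_nonneg y3); pose proof (Z.square_nonneg y4); lia).
  assert (Hr0 : 0 <= r).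
  { destruct (Z_lt_le_dec r 0); [|lia]. assert (m*r < 0) by (apply Z.mul_pos_neg; lia). lia. }
  assert (Hrm : r <= m).
  { destruct (Z_le_gt_dec r m); [lia|]. assert (m*m < m*r) by (apply Z.mul_lt_mono_pos_l; lia). lia. }
  destruct (Z.eq_dec r 0) as [Hr00|Hr00].
  - exfalso. rewrite Hr00 in Hr.
    pose proof (Z.square_nonneg y1); pose proof (Z.square_nonneg y2); pose proof (Z.square_nonneg y3); pose proof (Z.square_nonneg y4).
    assert (y1*y1 = 0) by lia. assert (y2*y2 = 0) by lia. assert (y3*y3 = 0) by lia. assert (y4*y4 = 0) by lia.
    assert (y1 = 0) by (apply Z.mul_eq_0 in H3; tauto). assert (y2 = 0) by (apply Z.mul_eq_0 in H4; tauto).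
    assert (y3 = 0) by (apply Z.mul_eq_0 in H5; tauto). assert (y4 = 0) by (apply Z.mul_eq_0 in H6; tauto).
    subst. apply (div_lt_prime p m Hp); [lia|].
    exists (k1*k1+k2*k2+k3*k3+k4*k4). apply Z.mul_reg_l with m; [lia|]. rewrite Hx. ring.
  - destruct (Z.eq_dec r m) as [Hrm'|Hrm'].
    + exfalso. rewrite Hrm' in Hr.
      assert (A1: 4*(y1*y1) = m*m) by lia. assert (A2: 4*(y2*y2) = m*m) by lia.
      assert (A3: 4*(y3*y3) = m*m) by lia. assert (A4: 4*(y4*y4) = m*m) by lia.
      assert (D: forall y, 4*(y*y) = m*m -> (m | 2*y)).
      { intros y Hy. assert ((2*y - m)*(2*y+m) = 0) by (ring_simplify; lia).
        apply Z.mul_eq_0 in H. destruct H.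
        - exists 1. lia.
        - exists (-1). lia. }
      apply (div_lt_prime p m Hp); [lia|].
      assert (Hp' : p = m + (2*y1)*k1 + (2*y2)*k2 + (2*y3)*k3 + (2*y4)*k4 + m*(k1*k1+k2*k2+k3*k3+k4*k4)).
      { apply Z.mul_reg_l with m; [lia|]. subst x1 x2 x3 x4. lia. }
      rewrite Hp'.
      repeat apply Z.divide_add_r; try apply Z.divide_mul_l; auto using Z.divide_refl, Z.divide_factor_l.
    +
      apply (IH r); [lia|lia|lia|].
      exists (y1*k1 + y2*k2 + y3*k3 + y4*k4 + r),
             (k1*y2 - k2*y1 + k3*y4 - k4*y3),
             (k1*y3 - k3*y1 - k2*y4 + k4*y2),
             (k1*y4 + k2*y3 - k3*y2 - k4*y1).
      assert (Z1 : x1*y1+x2*y2+x3*y3+x4*y4 = m*(y1*k1 + y2*k2 + y3*k3 + y4*k4 + r)) by (subst x1 x2 x3 x4; lia).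
      assert (Z2 : x1*y2-x2*y1+x3*y4-x4*y3 = m*(k1*y2 - k2*y1 + k3*y4 - k4*y3)) by (subst x1 x2 x3 x4; ring).
      assert (Z3 : x1*y3-x3*y1-x2*y4+x4*y2 = m*(k1*y3 - k3*y1 - k2*y4 + k4*y2)) by (subst x1 x2 x3 x4; ring).
      assert (Z4 : x1*y4+x2*y3-x3*y2-x4*y1 = m*(k1*y4 + k2*y3 - k3*y2 - k4*y1)) by (subst x1 x2 x3 x4; ring).
      apply Z.mul_reg_l with (m*m); [apply Z.neq_mul_0; lia|].
      assert (Hxm : m*m*(r*p) = (x1*x1+x2*x2+x3*x3+x4*x4)*(y1*y1+y2*y2+y3*y3+y4*y4)) by (rewrite <- Hx, <- Hr; ring).
      rewrite Hxm.
      assert (EU : (x1*x1+x2*x2+x3*x3+x4*x4)*(y1*y1+y2*y2+y3*y3+y4*y4) =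
        (x1*y1+x2*y2+x3*y3+x4*y4)*(x1*y1+x2*y2+x3*y3+x4*y4) + (x1*y2-x2*y1+x3*y4-x4*y3)*(x1*y2-x2*y1+x3*y4-x4*y3)
        + (x1*y3-x3*y1-x2*y4+x4*y2)*(x1*y3-x3*y1-x2*y4+x4*y2) + (x1*y4+x2*y3-x3*y2-x4*y1)*(x1*y4+x2*y3-x3*y2-x4*y1)) by ring.
      rewrite EU, Z1, Z2, Z3, Z4. ring.
Qed.

Definition zr (h : Z) : list Z := map Z.of_nat (seq 0 (S (Z.to_nat h))).

Lemma in_zr h x : 0 <= h -> (In x (zr h) <-> 0 <= x <= h).
Proof.
  intros Hh. unfold zr. rewrite in_map_iff. split.
  - intros (n & <- & Hn). apply in_seq in Hn. lia.
  - intros Hx. exists (Z.to_nat x). split; [lia|]. apply in_seq. lia.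
Qed.

Lemma NoDup_map_inj {A B} (f : A -> B) l :
  (forall x y, In x l -> In y l -> f x = f y -> x = y) -> NoDup l -> NoDup (map f l).
Proof.
  induction l as [|a l IH]; simpl; intros Hinj Hnd; constructor.
  - intros Hin. apply in_map_iff in Hin as (y & Hy & Hyl).
    inversion Hnd; subst. assert (y = a) by (apply Hinj; auto). subst; contradiction.
  - inversion Hnd; subst. apply IH; auto.
Qed.

Lemma mod_eq_div p a b : 0 < p -> a mod p = b mod p -> (p | a - b).
Proof.
  intros Hp H. pose proof (Z.div_mod a p ltac:(lia)). pose proof (Z.div_mod b p ltac:(lia)).
  exists (a/p - b/p). lia.
Qed.

Lemma div_small p d : 0 < p -> (p | d) -> -p < d < p -> d = 0.
Proof.
  intros Hp [q ->] H. destruct (Z_lt_le_dec q 0).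
  - assert (q*p <= -1*p) by (apply Z.mul_le_mono_nonneg_r; lia). lia.
  - destruct (Z.eq_dec q 0); [subst; lia|].
    assert (1*p <= q*p) by (apply Z.mul_le_mono_nonneg_r; lia). lia.
Qed.

Lemma sq_inj p h x y : prime p -> p = 2*h+1 -> 0 <= x <= h -> 0 <= y <= h ->
  (p | x*x - y*y) -> x = y.
Proof.
  intros Hp Hph Hx Hy Hd.
  assert (Hp1 : 1 < p) by (destruct Hp; lia).
  replace (x*x - y*y) with ((x-y)*(x+y)) in Hd by ring.
  destruct (prime_mult p Hp _ _ Hd) as [H|H].
  - apply div_small in H; lia.
  - apply div_small in H; lia.
Qed.

Lemma two_sq p h : prime p -> p = 2*h+1 -> 1 <= h ->
  exists x y, 0 <= x <= h /\ 0 <= y <= h /\ (p | x*x + y*y + 1).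
Proof.
  intros Hp Hph Hh.
  apply NNPP. intros Hno.
  set (L1 := map (fun x => (x*x) mod p) (zr h)).
  set (L2 := map (fun y => (-1 - y*y) mod p) (zr h)).
  assert (Hnd : NoDup (L1 ++ L2)).
  { apply NoDup_app.
    - apply NoDup_map_inj; [|unfold zr; apply NoDup_map_inj; [intros a b _ _; lia|apply seq_NoDup]].
      intros x y Hx Hy E. apply in_zr in Hx; [|lia]. apply in_zr in Hy; [|lia].
      apply mod_eq_div in E; [|lia]. eapply sq_inj; eauto.
    - apply NoDup_map_inj; [|unfold zr; apply NoDup_map_inj; [intros a b _ _; lia|apply seq_NoDup]].
      intros x y Hx Hy E. apply in_zr in Hx; [|lia]. apply in_zr in Hy; [|lia].
      apply mod_eq_div in E; [|lia]. symmetry. eapply sq_inj; eauto.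
      replace (y*y - x*x) with (-1 - x*x - (-1 - y*y)) by ring. exact E.
    - intros a Ha Hb. unfold L1, L2 in *. apply in_map_iff in Ha as (x & <- & Hx).
      apply in_map_iff in Hb as (y & Hy & Hy').
      apply in_zr in Hx; [|lia]. apply in_zr in Hy'; [|lia].
      apply Hno. exists x, y. split; [lia|]. split; [lia|].
      symmetry in Hy. apply mod_eq_div in Hy; [|lia].
      replace (x*x+y*y+1) with (x*x - (-1 - y*y)) by ring. exact Hy. }
  assert (Hincl : incl (L1 ++ L2) (zr (p-1))).
  { intros a Ha. apply in_zr; [lia|]. apply in_app_or in Ha.
    destruct Ha as [Ha|Ha]; apply in_map_iff in Ha as (x & <- & _);
    pose proof (Z.mod_pos_bound (x*x) p ltac:(lia)); pose proof (Z.mod_pos_bound (-1-x*x) p ltac:(lia)); lia. }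
  pose proof (NoDup_incl_length Hnd Hincl) as Hlen.
  unfold L1, L2, zr in Hlen. rewrite length_app, !length_map, !length_seq in Hlen.
  lia.
Qed.

Lemma S4_prime p : prime p -> S4 p.
Proof.
  intros Hp. assert (Hp1 : 1 < p) by (destruct Hp; lia).
  destruct (Z.eq_dec p 2) as [->|Hp2]; [exists 1, 1, 0, 0; reflexivity|].
  assert (Hodd : exists h, p = 2*h+1 /\ 1 <= h).
  { destruct (Z.Even_or_Odd p) as [[h Hh]|[h Hh]].
    - exfalso. apply (div_lt_prime p 2 Hp); [lia|]. exists h. lia.
    - exists h. lia. }
  destruct Hodd as (h & Hph & Hh).
  destruct (two_sq p h Hp Hph Hh) as (x & y & Hx & Hy & [m0 Hm0]).
  apply (descent p Hp (Z.to_nat m0) m0).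
  - nia.
  - lia.
  - nia.
  - exists x, y, 1, 0. lia.
Qed.

Lemma S4_all_aux : forall (N : nat) n, 0 <= n -> (Z.to_nat n <= N)%nat -> S4 n.
Proof.
  induction N as [|N IH]; intros n Hn HN.
  - assert (n = 0) by lia. subst. exists 0,0,0,0. reflexivity.
  - destruct (Z_le_gt_dec n 1).
    + destruct (Z.eq_dec n 0); subst; [exists 0,0,0,0; reflexivity|].
      assert (n = 1) by lia. subst. exists 1,0,0,0. reflexivity.
    + destruct (prime_dec n) as [Hp|Hp]; [apply S4_prime; auto|].
      destruct (not_prime_divide n ltac:(lia) Hp) as (d & Hd & [q Hq]).
      subst n. apply S4_mul; apply IH; nia.
Qed.

Lemma lagrange (n : nat) : exists a b c d : nat, n = (a*a+b*b+c*c+d*d)%nat.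
Proof.
  destruct (S4_all_aux n (Z.of_nat n) ltac:(lia) ltac:(lia)) as (a&b&c&d&H).
  exists (Z.abs_nat a), (Z.abs_nat b), (Z.abs_nat c), (Z.abs_nat d). nia.
Qed.

Lemma WZ_eq (g1 g2 : WZ) : (forall i, lamp g1 i = lamp g2 i) -> shift g1 = shift g2 -> g1 = g2.
Proof.
  destruct g1 as [l1 s1 f1], g2 as [l2 s2 f2]; simpl; intros Hl Hs.
  assert (l1 = l2) by (apply functional_extensionality; auto). subst.
  f_equal. apply proof_irrelevance.
Qed.

Definition apowZ (z : Z) : WZ := mkWZ (fun _ => 0) z zero_fin.

Lemma wmul_assoc a b c : wmul (wmul a b) c = wmul a (wmul b c).
Proof. apply WZ_eq; simpl; [intros i; rewrite Z.sub_add_distr; ring | ring]. Qed.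

Lemma wmul_one_l g : wmul wone g = g.
Proof. apply WZ_eq; simpl; [intros i; rewrite Z.sub_0_r; ring | ring]. Qed.
Lemma wmul_one_r g : wmul g wone = g.
Proof. apply WZ_eq; simpl; [intros i; ring | ring]. Qed.

Lemma apowZ_mul x y : wmul (apowZ x) (apowZ y) = apowZ (x+y).
Proof. apply WZ_eq; simpl; [reflexivity|ring]. Qed.

Lemma apowZ_comm x y : wmul (apowZ x) (apowZ y) = wmul (apowZ y) (apowZ x).
Proof. rewrite !apowZ_mul, Z.add_comm. reflexivity. Qed.

Lemma wpow_wa n : wpow wa n = apowZ (Z.of_nat n).
Proof.
  induction n as [|n IH]; [reflexivity|].
  unfold wpow in *; simpl Nat.iter. rewrite IH. change wa with (apowZ 1). rewrite apowZ_mul. f_equal; lia.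
Qed.

Lemma shift_wpow g n : shift (wpow g n) = Z.of_nat n * shift g.
Proof. induction n as [|n IH]; [reflexivity|]. unfold wpow in *; simpl Nat.iter. simpl shift. rewrite IH. lia. Qed.

Lemma wpow_comm g n : wmul (wpow g n) g = wmul g (wpow g n).
Proof.
  induction n as [|n IH]; [unfold wpow; simpl; rewrite wmul_one_l, wmul_one_r; reflexivity|].
  unfold wpow in *; simpl Nat.iter. rewrite wmul_assoc, IH. reflexivity.
Qed.

Lemma list_bound (l : list Z) : exists N : nat, forall i, In i l -> Z.abs i <= Z.of_nat N.
Proof.
  induction l as [|a l [N HN]]; [exists 0%nat; intros i []|].
  exists (Nat.max N (Z.abs_nat a)). intros i [<-|Hi]; [lia|]. specialize (HN i Hi). lia.
Qed.

Definition supp (f : Z -> Z) (N : nat) := forall i, Z.of_nat N < Z.abs i -> f i = 0.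

Lemma ex_supp g : exists N, supp (lamp g) N.
Proof.
  destruct (lamp_fin g) as [l Hl]. destruct (list_bound l) as [N HN]. exists N.
  intros i Hi. destruct (Z.eq_dec (lamp g i) 0) as [E|E]; [exact E|].
  specialize (HN i (Hl i E)). lia.
Qed.

Definition bnd (g : WZ) : nat := proj1_sig (constructive_indefinite_description _ (ex_supp g)).
Lemma bnd_spec g : supp (lamp g) (bnd g).
Proof. unfold bnd. destruct (constructive_indefinite_description _ _). assumption. Qed.

Lemma supp_mono f N M : supp f N -> (N <= M)%nat -> supp f M.
Proof. intros H HNM i Hi. apply H. lia. Qed.

Fixpoint wsumL (f : Z -> Z) (lo : Z) (len : nat) : Z :=
  match len with O => 0 | S l => f lo + wsumL f (lo+1) l end.

Lemma wsumL_ext f g lo len : (forall i, f i = g i) -> wsumL f lo len = wsumL g lo len.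
Proof. revert lo; induction len; simpl; intros lo H; [reflexivity|]. rewrite H, IHlen; auto. Qed.

Lemma wsumL_add f g lo len : wsumL (fun i => f i + g i) lo len = wsumL f lo len + wsumL g lo len.
Proof. revert lo; induction len; simpl; intros lo; [reflexivity|]. rewrite IHlen. ring. Qed.

Lemma wsumL_scal c f lo len : wsumL (fun i => c * f i) lo len = c * wsumL f lo len.
Proof. revert lo; induction len; simpl; intros lo; [ring|]. rewrite IHlen. ring. Qed.

Lemma wsumL_shift f s lo len : wsumL (fun i => f (i - s)) lo len = wsumL f (lo - s) len.
Proof.
  revert lo; induction len; simpl; intros lo; [reflexivity|]. rewrite IHlen.
  replace (lo + 1 - s) with (lo - s + 1) by ring. reflexivity.
Qed.

Lemma wsumL_split f lo a b : wsumL f lo (a + b) = wsumL f lo a + wsumL f (lo + Z.of_nat a) b.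
Proof.
  revert lo; induction a; simpl; intros lo; [rewrite Z.add_0_r; ring|].
  rewrite IHa. replace (lo + 1 + Z.of_nat a) with (lo + Z.pos (Pos.of_succ_nat a)) by lia. ring.
Qed.

Lemma wsumL_zero f lo len : (forall i, lo <= i < lo + Z.of_nat len -> f i = 0) -> wsumL f lo len = 0.
Proof.
  revert lo; induction len; simpl; intros lo H; [reflexivity|].
  rewrite H by lia. rewrite IHlen; [reflexivity|]. intros i Hi; apply H; lia.
Qed.

Definition win f (N : nat) := wsumL f (- Z.of_nat N) (2*N+1).

Lemma wsumL_cover f N lo len : supp f N -> lo <= - Z.of_nat N -> Z.of_nat N < lo + Z.of_nat len ->
  wsumL f lo len = win f N.
Proof.
  intros Hs Hlo Hhi. unfold win.
  set (a := Z.to_nat (- Z.of_nat N - lo)).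
  set (c := (len - a - (2*N+1))%nat).
  replace len with (a + ((2*N+1) + c))%nat by lia.
  rewrite !wsumL_split. rewrite (wsumL_zero f lo a), (wsumL_zero f _ c).
  - replace (lo + Z.of_nat a) with (- Z.of_nat N) by lia. ring.
  - intros i Hi. apply Hs. lia.
  - intros i Hi. apply Hs. lia.
Qed.

Lemma win_stable f N M : supp f N -> (N <= M)%nat -> win f M = win f N.
Proof. intros Hs H. unfold win at 1. apply wsumL_cover; auto; lia. Qed.

Definition Sig (g : WZ) : Z := win (lamp g) (bnd g).
Definition Mom (g : WZ) : Z := win (fun i => i * lamp g i) (bnd g).

Lemma supp_mom f N : supp f N -> supp (fun i => i * f i) N.
Proof. intros H i Hi. rewrite H by lia. ring. Qed.

Lemma Sig_spec g N : supp (lamp g) N -> Sig g = win (lamp g) N.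
Proof.
  intros H. unfold Sig. rewrite <- (win_stable _ _ (Nat.max N (bnd g)) H) by lia.
  symmetry; apply win_stable; [apply bnd_spec|lia].
Qed.

Lemma Mom_spec g N : supp (lamp g) N -> Mom g = win (fun i => i * lamp g i) N.
Proof.
  intros H. unfold Mom. rewrite <- (win_stable _ _ (Nat.max N (bnd g)) (supp_mom _ _ H)) by lia.
  symmetry; apply win_stable; [apply supp_mom, bnd_spec|lia].
Qed.

Lemma win_add f g N : win (fun i => f i + g i) N = win f N + win g N.
Proof. apply wsumL_add. Qed.

Lemma win_shift f s N M : supp f N -> (N + Z.abs_nat s <= M)%nat ->
  win (fun i => f (i - s)) M = win f N.
Proof.
  intros Hs HM. unfold win at 1. rewrite wsumL_shift. apply wsumL_cover; auto; lia.
Qed.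

Lemma Sig_mul g1 g2 : Sig (wmul g1 g2) = Sig g1 + Sig g2.
Proof.
  set (N1 := bnd g1). set (N2 := bnd g2). set (M := (N1 + N2 + Z.abs_nat (shift g1))%nat).
  assert (H1 : supp (lamp g1) N1) by apply bnd_spec.
  assert (H2 : supp (lamp g2) N2) by apply bnd_spec.
  assert (H12 : supp (lamp (wmul g1 g2)) M).
  { intros i Hi. simpl. rewrite H1 by lia. rewrite H2 by lia. reflexivity. }
  rewrite (Sig_spec _ _ H12). simpl lamp. rewrite win_add.
  rewrite (win_shift _ _ N2 M H2) by lia.
  rewrite (win_stable _ N1 M H1) by lia.
  unfold Sig. reflexivity.
Qed.

Lemma Mom_mul g1 g2 : Mom (wmul g1 g2) = Mom g1 + Mom g2 + shift g1 * Sig g2.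
Proof.
  set (N1 := bnd g1). set (N2 := bnd g2). set (M := (N1 + N2 + Z.abs_nat (shift g1))%nat).
  assert (H1 : supp (lamp g1) N1) by apply bnd_spec.
  assert (H2 : supp (lamp g2) N2) by apply bnd_spec.
  assert (H12 : supp (lamp (wmul g1 g2)) M).
  { intros i Hi. simpl. rewrite H1 by lia. rewrite H2 by lia. reflexivity. }
  rewrite (Mom_spec _ _ H12). simpl lamp.
  unfold win. erewrite wsumL_ext by (intros i; apply Z.mul_add_distr_l).
  fold (win (fun i => i * lamp g1 i) M). rewrite wsumL_add.
  fold (win (fun i => i * lamp g1 i) M).
  fold (win (fun i => i * lamp g2 (i - shift g1)) M).
  rewrite (win_stable _ N1 M (supp_mom _ _ H1)) by lia.
  set (F := fun j => (j + shift g1) * lamp g2 j).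
  assert (HF : supp F N2) by (intros i Hi; unfold F; rewrite H2 by lia; ring).
  replace (win (fun i => i * lamp g2 (i - shift g1)) M) with (win (fun i => F (i - shift g1)) M)
    by (unfold win; apply wsumL_ext; intros i; unfold F; ring).
  rewrite (win_shift F _ N2 M HF) by lia.
  replace (win F N2) with (win (fun j => j * lamp g2 j) N2 + shift g1 * win (lamp g2) N2)
    by (unfold win, F; rewrite <- wsumL_scal, <- wsumL_add; apply wsumL_ext; intros; ring).
  rewrite <- (Mom_spec g2 N2 H2), <- (Sig_spec g2 N2 H2). change (win (fun i : Z => i * lamp g1 i) N1) with (Mom g1). ring.
Qed.

Lemma comm_sig z x : wmul z x = wmul x z -> shift z * Sig x = shift x * Sig z.
Proof.
  intros H. pose proof (Mom_mul z x) as A. pose proof (Mom_mul x z) as B.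
  rewrite H in A. lia.
Qed.

Lemma Sig_zero g : (forall i, lamp g i = 0) -> Sig g = 0.
Proof.
  intros H. assert (Hs : supp (lamp g) 0) by (intros i _; apply H).
  rewrite (Sig_spec _ _ Hs). unfold win. simpl. rewrite H. reflexivity.
Qed.

Lemma Sig_apowZ z : Sig (apowZ z) = 0.
Proof. apply Sig_zero. reflexivity. Qed.

Lemma Sig_wb : Sig wb = 1.
Proof.
  assert (Hs : supp (lamp wb) 0).
  { intros i Hi. simpl. destruct (Z.eqb_spec i 0); [lia|reflexivity]. }
  rewrite (Sig_spec _ _ Hs). reflexivity.
Qed.

Lemma CA_pow j : wmul j wa = wmul wa j -> j = apowZ (shift j).
Proof.
  intros H. apply WZ_eq; [|reflexivity]. simpl.
  assert (Hl : forall i, lamp j i = lamp j (i - 1)).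
  { intros i. apply (f_equal (fun g => lamp g i)) in H. simpl in H. lia. }
  assert (Hk : forall (k : nat) i, lamp j i = lamp j (i - Z.of_nat k)).
  { induction k as [|k IH]; intros i; [rewrite Z.sub_0_r; reflexivity|].
    rewrite IH. rewrite Hl. f_equal. lia. }
  intros i. pose proof (bnd_spec j) as Hs.
  rewrite (Hk (Z.to_nat (Z.abs i) + bnd j + 1)%nat i). apply Hs. lia.
Qed.

Lemma H_shift e : wmul wb e = wmul e wb -> shift e = 0.
Proof.
  intros H. apply (f_equal (fun g => lamp g (shift e))) in H. simpl in H.
  rewrite Z.sub_diag, Z.sub_0_r in H. simpl in H.
  destruct (Z.eqb_spec (shift e) 0); [assumption|]. lia.
Qed.

Lemma shift_H e : shift e = 0 -> wmul wb e = wmul e wb.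
Proof.
  intros H. apply WZ_eq; simpl; [|lia]. intros i. rewrite H, !Z.sub_0_r. ring.
Qed.

Lemma shift_fin (g : WZ) (s : Z) : exists l : list Z, forall i, lamp g (i + s) <> 0 -> In i l.
Proof.
  destruct (lamp_fin g) as [l Hl]. exists (map (fun j => j - s) l).
  intros i Hi. apply in_map_iff. exists (i + s). split; [lia|]. auto.
Qed.

Lemma shiftN_fin (g : WZ) (s : Z) : exists l : list Z, forall i, - lamp g (i + s) <> 0 -> In i l.
Proof.
  destruct (shift_fin g s) as [l Hl]. exists l. intros i Hi. apply Hl. lia.
Qed.

Definition hpart (g : WZ) : WZ := mkWZ (fun i => lamp g (i + shift g)) 0 (shift_fin g (shift g)).
Definition winv (g : WZ) : WZ := mkWZ (fun i => - lamp g (i + shift g)) (- shift g) (shiftN_fin g (shift g)).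

Lemma decomp g : g = wmul (apowZ (shift g)) (hpart g).
Proof. apply WZ_eq; simpl; [intros i; f_equal; lia|lia]. Qed.

Lemma wmul_inv g : wmul g (winv g) = wone.
Proof. apply WZ_eq; simpl; [intros i; rewrite Z.sub_add; ring|ring]. Qed.

Lemma Sig_wone : Sig wone = 0.
Proof. apply Sig_zero; reflexivity. Qed.

Lemma Sig_winv g : Sig (winv g) = - Sig g.
Proof. pose proof (Sig_mul g (winv g)) as H. rewrite wmul_inv, Sig_wone in H. lia. Qed.

Lemma Sig_wpow g n : Sig (wpow g n) = Z.of_nat n * Sig g.
Proof.
  induction n as [|n IH]; [apply Sig_wone|]. unfold wpow in *; simpl Nat.iter.
  rewrite Sig_mul, IH. lia.
Qed.

Lemma win_fin f N : supp f N -> exists l : list Z, forall i, f i <> 0 -> In i l.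
Proof.
  intros H. exists (map (fun k => Z.of_nat k - Z.of_nat N) (seq 0 (2*N+1))).
  intros i Hi. apply in_map_iff. exists (Z.to_nat (i + Z.of_nat N)).
  destruct (Z_le_gt_dec (Z.abs i) (Z.of_nat N)); [|exfalso; apply Hi, H; lia].
  split; [lia|]. apply in_seq. lia.
Qed.

Lemma partial_sum c : shift c = 0 -> Sig c = 0 ->
  exists q, shift q = 0 /\ wmul wa (wmul q c) = wmul q wa.
Proof.
  intros Hs HS. set (N := bnd c). pose proof (bnd_spec c) as Hc. fold N in Hc.
  set (qf := fun i => wsumL (lamp c) (- Z.of_nat N) (Z.to_nat (i + Z.of_nat N))).
  assert (Hq : supp qf (N+1)).
  { intros i Hi. unfold qf. destruct (Z_le_gt_dec i 0).
    - replace (Z.to_nat (i + Z.of_nat N)) with 0%nat by lia. reflexivity.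
    - rewrite (wsumL_cover _ N) by (auto; lia). rewrite <- (Sig_spec _ _ Hc). exact HS. }
  destruct (win_fin qf _ Hq) as [l Hl].
  exists (mkWZ qf 0 (ex_intro _ l Hl)). split; [reflexivity|].
  apply WZ_eq; [|simpl; rewrite Hs; reflexivity]. simpl. intros i. rewrite !Z.sub_0_r.
  unfold qf. destruct (Z_le_gt_dec (i + Z.of_nat N) 0).
  - replace (Z.to_nat (i + Z.of_nat N)) with 0%nat by lia.
    replace (Z.to_nat (i - 1 + Z.of_nat N)) with 0%nat by lia. simpl.
    rewrite Hc by lia. reflexivity.
  - replace (Z.to_nat (i + Z.of_nat N)) with (Z.to_nat (i - 1 + Z.of_nat N) + 1)%nat by lia.
    rewrite wsumL_split. simpl. rewrite !Z.add_0_r. f_equal. f_equal. lia.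
Qed.

Definition Msem (u v w : WZ) : Prop :=
  exists y z j c e q e2 : WZ,
    wmul y (wmul wb wa) = wmul (wmul wb wa) y /\
    y = wmul v e /\
    wmul wb e = wmul e wb /\
    wmul z (wmul wb u) = wmul (wmul wb u) z /\
    wmul j wa = wmul wa j /\
    wmul wb q = wmul q wb /\
    wmul wa (wmul q c) = wmul q wa /\
    z = wmul (wmul y j) c /\
    wmul wb e2 = wmul e2 wb /\
    z = wmul w e2 /\
    wmul w wa = wmul wa w.

Lemma Msem_sound m n w : Msem (apowZ m) (apowZ n) w -> w = apowZ (m * n).
Proof.
  intros (y&z&j&c&e&q&e2&Hy&Hye&He&Hz&Hj&Hq&Hc&Hzd&He2&Hzw&Hw).
  apply CA_pow in Hw. apply CA_pow in Hj. rewrite Hw. f_equal.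
  apply H_shift in He. apply H_shift in He2. apply H_shift in Hq.
  assert (Sy : shift y = n) by (rewrite Hye; simpl; lia).
  assert (Sz : shift z = shift w) by (rewrite Hzw; simpl; lia).
  apply comm_sig in Hy. rewrite Sig_mul, Sig_wb in Hy. change wa with (apowZ 1) in Hy.
  rewrite Sig_apowZ in Hy. change (shift (wmul wb (apowZ 1))) with (0 + 1) in Hy.
  assert (SGc : Sig c = 0).
  { apply (f_equal Sig) in Hc. rewrite !Sig_mul in Hc. lia. }
  assert (SGz : Sig z = n).
  { rewrite Hzd, !Sig_mul, SGc, Hj, Sig_apowZ. lia. }
  apply comm_sig in Hz. rewrite Sig_mul, Sig_wb, Sig_apowZ in Hz. change (shift (wmul wb (apowZ m))) with (0 + m) in Hz. nia.
Qed.

Lemma Msem_complete (m : Z) (n : nat) : Msem (apowZ m) (apowZ (Z.of_nat n)) (apowZ (m * Z.of_nat n)).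
Proof.
  set (y := wpow (wmul wb wa) n).
  set (z := wpow (wmul wb (apowZ m)) n).
  set (j := apowZ (m * Z.of_nat n - Z.of_nat n)).
  set (c := wmul (winv (wmul y j)) z).
  assert (Sy : shift y = Z.of_nat n) by (unfold y; rewrite shift_wpow; simpl; lia).
  assert (Sz : shift z = m * Z.of_nat n) by (unfold z; rewrite shift_wpow; simpl; lia).
  assert (SGy : Sig y = Z.of_nat n).
  { unfold y. rewrite Sig_wpow, Sig_mul, Sig_wb. change wa with (apowZ 1). rewrite Sig_apowZ. lia. }
  assert (SGz : Sig z = Z.of_nat n).
  { unfold z. rewrite Sig_wpow, Sig_mul, Sig_wb, Sig_apowZ. lia. }
  assert (Hsc : shift c = 0) by (unfold c; simpl; unfold j; simpl; lia).
  assert (HSc : Sig c = 0).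
  { unfold c. rewrite Sig_mul, Sig_winv, Sig_mul. unfold j. rewrite Sig_apowZ. lia. }
  destruct (partial_sum c Hsc HSc) as (q & Hq0 & Hq).
  exists y, z, j, c, (hpart y), q, (hpart z).
  split; [apply wpow_comm|].
  split; [rewrite <- Sy; apply decomp|].
  split; [apply shift_H; reflexivity|].
  split; [apply wpow_comm|].
  split; [change wa with (apowZ 1); apply apowZ_comm|].
  split; [apply shift_H; exact Hq0|].
  split; [exact Hq|].
  split; [unfold c; rewrite <- wmul_assoc, wmul_inv, wmul_one_l; reflexivity|].
  split; [apply shift_H; reflexivity|].
  split; [rewrite <- Sz; apply decomp|].
  change wa with (apowZ 1); apply apowZ_comm.
Qed.

Close Scope Z_scope.
Open Scope nat_scope.

Definition ax (k n : nat) : nat := k + 3 + 2*n.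
Definition gv (i : nat) : term grp_sym := Var i.
Definition gm (t1 t2 : term grp_sym) : term grp_sym := App Mul t1 t2.
Definition comm (t1 t2 : term grp_sym) : form grp_sym := FEq (gm t1 t2) (gm t2 t1).

Definition Mform (k x1 x2 x3 L : nat) : form grp_sym :=
  let Y := ax k L in let Z := ax k (L+1) in let J := ax k (L+2) in let C := ax k (L+3) in
  let E := ax k (L+4) in let Q := ax k (L+5) in let E2 := ax k (L+6) in
  let A := gv k in let B := gv (k+1) in
  FEx Y (FEx Z (FEx J (FEx C (FEx E (FEx Q (FEx E2 (
   FAnd (comm (gv Y) (gm B A))
   (FAnd (FEq (gv Y) (gm (gv x2) (gv E)))
   (FAnd (comm B (gv E))
   (FAnd (comm (gv Z) (gm B (gv x1)))
   (FAnd (comm (gv J) A)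
   (FAnd (comm B (gv Q))
   (FAnd (FEq (gm A (gm (gv Q) (gv C))) (gm (gv Q) A))
   (FAnd (FEq (gv Z) (gm (gm (gv Y) (gv J)) (gv C)))
   (FAnd (comm B (gv E2))
   (FAnd (FEq (gv Z) (gm (gv x3) (gv E2)))
         (comm (gv x3) A))))))))))))))))).

Ltac neq_solve := first [ match goal with H : forall n, _ -> ?x <> ax _ n |- ?x <> _ => apply H; lia end
  | unfold ax; lia ].

Ltac eqb_simpl := repeat match goal with
 | |- context [Nat.eqb ?a ?a] => rewrite Nat.eqb_refl
 | |- context [Nat.eqb ?a ?b] => rewrite (proj2 (Nat.eqb_neq a b)) by neq_solve
 end; cbv beta iota.

Lemma Mform_sem k x1 x2 x3 L (eta : nat -> WZ) :
  eta k = wa -> eta (k+1) = wb ->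
  (forall n, L <= n -> x1 <> ax k n) -> (forall n, L <= n -> x2 <> ax k n) ->
  (forall n, L <= n -> x3 <> ax k n) ->
  (sat grp_op eta (Mform k x1 x2 x3 L) <-> Msem (eta x1) (eta x2) (eta x3)).
Proof.
  intros HA HB H1 H2 H3.
  assert (forall n, L <= n -> k <> ax k n) by (intros; unfold ax; lia).
  assert (forall n, L <= n -> k+1 <> ax k n) by (intros; unfold ax; lia).
  unfold Mform, Msem, comm, gm, gv. cbn [sat eval_term grp_op]. unfold upd. cbv beta.
  eqb_simpl. rewrite HA, HB. reflexivity.
Qed.

Ltac eqb_simpl_in H := repeat match type of H with
 | context [Nat.eqb ?a ?a] => rewrite Nat.eqb_refl in H
 | context [Nat.eqb ?a ?b] => rewrite (proj2 (Nat.eqb_neq a b)) in H by neq_solve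
 end; cbv beta iota in H.

Definition Dform (k v L : nat) : form grp_sym :=
  let X1 := ax k L in let X2 := ax k (L+1) in let X3 := ax k (L+2) in let X4 := ax k (L+3) in
  let S1 := ax k (L+4) in let S2 := ax k (L+5) in let S3 := ax k (L+6) in let S4 := ax k (L+7) in
  let A := gv k in
  FEx X1 (FEx X2 (FEx X3 (FEx X4 (FEx S1 (FEx S2 (FEx S3 (FEx S4 (
   FAnd (comm (gv X1) A) (FAnd (comm (gv X2) A) (FAnd (comm (gv X3) A) (FAnd (comm (gv X4) A)
   (FAnd (Mform k X1 X1 S1 (L+8)) (FAnd (Mform k X2 X2 S2 (L+8))
   (FAnd (Mform k X3 X3 S3 (L+8)) (FAnd (Mform k X4 X4 S4 (L+8))
   (FEq (gv v) (gm (gm (gm (gv S1) (gv S2)) (gv S3)) (gv S4)))))))))))))))))).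


Lemma Dform_sem k v L (eta : nat -> WZ) :
  eta k = wa -> eta (k+1) = wb -> (forall n, L <= n -> v <> ax k n) ->
  (sat grp_op eta (Dform k v L) <-> exists n : nat, eta v = apowZ (Z.of_nat n)).
Proof.
  intros HA HB Hv.
  assert (Hk : forall n, L <= n -> k <> ax k n) by (intros; unfold ax; lia).
  assert (Hk1 : forall n, L <= n -> k+1 <> ax k n) by (intros; unfold ax; lia).
  unfold Dform, comm, gm, gv. cbn [sat eval_term grp_op]. split.
  - intros (x1&x2&x3&x4&s1&s2&s3&s4&C1&C2&C3&C4&M1&M2&M3&M4&E).
    rewrite Mform_sem in M1, M2, M3, M4 by (first [unfold upd; cbv beta; eqb_simpl; assumption | intros; unfold ax; lia]).
    unfold upd in C1, C2, C3, C4, M1, M2, M3, M4, E. cbv beta in C1, C2, C3, C4, M1, M2, M3, M4, E.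
    eqb_simpl_in C1. eqb_simpl_in C2. eqb_simpl_in C3. eqb_simpl_in C4.
    eqb_simpl_in M1. eqb_simpl_in M2. eqb_simpl_in M3. eqb_simpl_in M4. eqb_simpl_in E.
    rewrite HA in C1, C2, C3, C4.
    apply CA_pow in C1, C2, C3, C4.
    rewrite C1 in M1. rewrite C2 in M2. rewrite C3 in M3. rewrite C4 in M4.
    apply Msem_sound in M1, M2, M3, M4. subst s1 s2 s3 s4.
    rewrite !apowZ_mul in E.
    set (m := (shift x1 * shift x1 + shift x2 * shift x2 + shift x3 * shift x3 + shift x4 * shift x4)%Z) in *.
    exists (Z.to_nat m). rewrite E. f_equal. unfold m. nia.
  - intros (n & En). destruct (lagrange n) as (a&b&c&d&Hn).
    exists (apowZ (Z.of_nat a)), (apowZ (Z.of_nat b)), (apowZ (Z.of_nat c)), (apowZ (Z.of_nat d)).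
    exists (apowZ (Z.of_nat a * Z.of_nat a)), (apowZ (Z.of_nat b * Z.of_nat b)),
           (apowZ (Z.of_nat c * Z.of_nat c)), (apowZ (Z.of_nat d * Z.of_nat d)).
    rewrite !Mform_sem by (first [unfold upd; cbv beta; eqb_simpl; assumption | intros; unfold ax; lia]).
    unfold upd. cbv beta. eqb_simpl. rewrite HA.
    change wa with (apowZ 1).
    split; [apply apowZ_comm|]. split; [apply apowZ_comm|]. split; [apply apowZ_comm|]. split; [apply apowZ_comm|].
    split; [apply Msem_complete|]. split; [apply Msem_complete|].
    split; [apply Msem_complete|]. split; [apply Msem_complete|].
    rewrite En, !apowZ_mul. f_equal. subst n. lia.
Qed.

Definition sg (k i : nat) : nat := if i <? k then i else k + 2 + 2*i.

Lemma sg_ax k i n : sg k i <> ax k n.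
Proof. unfold sg, ax. destruct (Nat.ltb_spec i k); lia. Qed.
Lemma sg_inj k i j : sg k i = sg k j -> i = j.
Proof. unfold sg. destruct (Nat.ltb_spec i k), (Nat.ltb_spec j k); lia. Qed.
Lemma sg_k k i : sg k i <> k /\ sg k i <> k+1.
Proof. unfold sg. destruct (Nat.ltb_spec i k); lia. Qed.
Lemma sg_lt k i : i < k -> sg k i = i.
Proof. unfold sg. destruct (Nat.ltb_spec i k); lia. Qed.

Lemma upd_eq {D} (r : nat -> D) i d : upd r i d i = d.
Proof. unfold upd. rewrite Nat.eqb_refl. reflexivity. Qed.
Lemma upd_neq {D} (r : nat -> D) i d j : j <> i -> upd r i d j = r j.
Proof. intros H. unfold upd. rewrite (proj2 (Nat.eqb_neq j i) H). reflexivity. Qed.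

Lemma U2o {D} (e : nat -> D) a1 a2 g1 g2 o : o <> a1 -> o <> a2 -> upd (upd e a1 g1) a2 g2 o = e o.
Proof. intros. rewrite !upd_neq; auto. Qed.
Lemma U21 {D} (e : nat -> D) a1 a2 g1 g2 : a1 <> a2 -> upd (upd e a1 g1) a2 g2 a1 = g1.
Proof. intros. rewrite upd_neq, upd_eq; auto. Qed.
Lemma U22 {D} (e : nat -> D) a1 a2 g1 g2 : upd (upd e a1 g1) a2 g2 a2 = g2.
Proof. apply upd_eq. Qed.

Definition Inv (k : nat) (rho : nat -> nat) (eta : nat -> WZ) : Prop :=
  (forall i, eta (sg k i) = apowZ (Z.of_nat (rho i))) /\ eta k = wa /\ eta (k+1) = wb.

Lemma Inv_upd_ax k rho eta n g : Inv k rho eta -> Inv k rho (upd eta (ax k n) g).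
Proof.
  intros (H1&H2&H3). split; [|split].
  - intros i. rewrite upd_neq by apply sg_ax. auto.
  - rewrite upd_neq by (unfold ax; lia). auto.
  - rewrite upd_neq by (unfold ax; lia). auto.
Qed.

Lemma Inv_upd_sg k rho eta i d : Inv k rho eta -> Inv k (upd rho i d) (upd eta (sg k i) (apowZ (Z.of_nat d))).
Proof.
  intros (H1&H2&H3). split; [|split].
  - intros j. destruct (Nat.eq_dec j i) as [->|Hne].
    + rewrite !upd_eq. reflexivity.
    + rewrite !upd_neq; auto. intros E. apply sg_inj in E. auto.
  - rewrite upd_neq by (apply not_eq_sym, sg_k). auto.
  - rewrite upd_neq by (apply not_eq_sym, sg_k). auto.
Qed.

Fixpoint TT (k : nat) (t : term arith_sym) (o L : nat) : form grp_sym :=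
  match t with
  | Var i => FEq (gv o) (gv (sg k i))
  | App f t1 t2 => FEx (ax k L) (FEx (ax k (L+1)) (FAnd (TT k t1 (ax k L) (L+2))
      (FAnd (TT k t2 (ax k (L+1)) (L+2))
        (match f with
         | Plus => FEq (gv o) (gm (gv (ax k L)) (gv (ax k (L+1))))
         | Times => Mform k (ax k L) (ax k (L+1)) o (L+2) end))))
  end.

Lemma TT_sem t : forall k L o rho eta, Inv k rho eta -> (forall n, L <= n -> o <> ax k n) ->
  (sat grp_op eta (TT k t o L) <-> eta o = apowZ (Z.of_nat (eval_term arith_op rho t))).
Proof.
  induction t as [i|f t1 IH1 t2 IH2]; intros k L o rho eta HI Ho.
  - cbn. destruct HI as (H1&_). rewrite H1. reflexivity.
  - cbn [TT sat]. set (a1 := ax k L). set (a2 := ax k (L+1)).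
    assert (Ha12 : a1 <> a2) by (unfold a1, a2, ax; lia).
    assert (Ho1 : o <> a1) by (apply Ho; lia). assert (Ho2 : o <> a2) by (apply Ho; lia).
    assert (F1 : forall n, L + 2 <= n -> a1 <> ax k n) by (intros; unfold a1, ax; lia).
    assert (F2 : forall n, L + 2 <= n -> a2 <> ax k n) by (intros; unfold a2, ax; lia).
    assert (HIu : forall g1 g2, Inv k rho (upd (upd eta a1 g1) a2 g2)) by (intros; unfold a1, a2; apply Inv_upd_ax, Inv_upd_ax, HI).
    destruct HI as (_&HA&HB).
    split.
    + intros (g1&g2&A&B&C).
      rewrite (IH1 k (L+2) a1 rho _ (HIu g1 g2) F1) in A.
      rewrite (IH2 k (L+2) a2 rho _ (HIu g1 g2) F2) in B.
      rewrite U21 in A by auto. rewrite U22 in B.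
      destruct f.
      * cbn in C. rewrite U21, U22, U2o in C by auto.
        rewrite C, A, B, apowZ_mul. cbn [eval_term arith_op]. f_equal. lia.
      * rewrite Mform_sem in C.
        -- rewrite U21, U22, U2o in C by auto.
           rewrite A, B in C. apply Msem_sound in C. rewrite C. cbn [eval_term arith_op]. f_equal. lia.
        -- rewrite U2o by (unfold a1, a2, ax; lia). exact HA.
        -- rewrite U2o by (unfold a1, a2, ax; lia). exact HB.
        -- exact F1.
        -- exact F2.
        -- intros n Hn. apply Ho. lia.
    + intros E.
      exists (apowZ (Z.of_nat (eval_term arith_op rho t1))), (apowZ (Z.of_nat (eval_term arith_op rho t2))).
      rewrite (IH1 k (L+2) a1 rho _ (HIu _ _) F1).
      rewrite (IH2 k (L+2) a2 rho _ (HIu _ _) F2).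
      rewrite U21 by auto. rewrite U22.
      split; [reflexivity|]. split; [reflexivity|].
      destruct f.
      * cbn. rewrite U21, U22, U2o by auto.
        rewrite E, apowZ_mul. cbn [eval_term arith_op]. f_equal. lia.
      * rewrite Mform_sem.
        -- rewrite U21, U22, U2o by auto.
           rewrite E. cbn [eval_term arith_op]. rewrite Nat2Z.inj_mul. apply Msem_complete.
        -- rewrite U2o by (unfold a1, a2, ax; lia). exact HA.
        -- rewrite U2o by (unfold a1, a2, ax; lia). exact HB.
        -- exact F1.
        -- exact F2.
        -- intros n Hn. apply Ho. lia.
Qed.

Fixpoint T (k : nat) (phi : form arith_sym) : form grp_sym :=
  match phi with
  | FEq t1 t2 => FEx (ax k 0) (FEx (ax k 1) (FAnd (TT k t1 (ax k 0) 2) (FAnd (TT k t2 (ax k 1) 2)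
                   (FEq (gv (ax k 0)) (gv (ax k 1))))))
  | FNot p => FNot (T k p)
  | FAnd p q => FAnd (T k p) (T k q)
  | FEx i p => FEx (sg k i) (FAnd (Dform k (sg k i) 0) (T k p))
  end.

Lemma apowZ_inj x y : apowZ x = apowZ y -> x = y.
Proof. intros H. apply (f_equal Defs.shift) in H. exact H. Qed.

Lemma T_sem phi : forall k rho eta, Inv k rho eta -> (sat arith_op rho phi <-> sat grp_op eta (T k phi)).
Proof.
  induction phi as [t1 t2|p IH|p IHp q IHq|i p IH]; intros k rho eta HI.
  - cbn [T sat]. set (a1 := ax k 0). set (a2 := ax k 1).
    assert (Ha12 : a1 <> a2) by (unfold a1, a2, ax; lia).
    assert (F1 : forall n, 2 <= n -> a1 <> ax k n) by (intros; unfold a1, ax; lia).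
    assert (F2 : forall n, 2 <= n -> a2 <> ax k n) by (intros; unfold a2, ax; lia).
    assert (HIu : forall g1 g2, Inv k rho (upd (upd eta a1 g1) a2 g2))
      by (intros g1 g2; unfold a1, a2; apply Inv_upd_ax; apply Inv_upd_ax; exact HI).
    split.
    + intros E. exists (apowZ (Z.of_nat (eval_term arith_op rho t1))), (apowZ (Z.of_nat (eval_term arith_op rho t2))).
      rewrite (TT_sem t1 k 2 a1 rho _ (HIu _ _) F1).
      rewrite (TT_sem t2 k 2 a2 rho _ (HIu _ _) F2).
      cbn [eval_term gv]. rewrite U21, U22 by auto. rewrite E. auto.
    + intros (g1&g2&A&B&C).
      rewrite (TT_sem t1 k 2 a1 rho _ (HIu _ _) F1) in A.
      rewrite (TT_sem t2 k 2 a2 rho _ (HIu _ _) F2) in B.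
      cbn [eval_term gv] in C. rewrite U21 in A, C by auto. rewrite U22 in B, C.
      rewrite A, B in C. apply apowZ_inj in C. lia.
  - cbn [T sat]. rewrite (IH k rho eta HI). reflexivity.
  - cbn [T sat]. rewrite (IHp k rho eta HI), (IHq k rho eta HI). reflexivity.
  - cbn [T sat]. destruct HI as (H1&HA&HB).
    assert (Hs : forall g, upd eta (sg k i) g k = wa /\ upd eta (sg k i) g (k+1) = wb).
    { intros g. rewrite !upd_neq by (apply not_eq_sym, sg_k). auto. }
    split.
    + intros (d & Hd). exists (apowZ (Z.of_nat d)). split.
      * apply Dform_sem; try apply Hs; [intros n _; apply sg_ax|].
        exists d. apply upd_eq.
      * apply (proj1 (IH k (upd rho i d) _ (Inv_upd_sg k rho eta i d (conj H1 (conj HA HB))))). exact Hd.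
    + intros (g & Hd & Hp). apply Dform_sem in Hd; try apply Hs; [|intros n _; apply sg_ax].
      destruct Hd as (d & Ed). rewrite upd_eq in Ed. subst g.
      exists d. apply (proj2 (IH k _ _ (Inv_upd_sg k rho eta i d (conj H1 (conj HA HB))))). exact Hp.
Qed.

Ltac fvsolve := repeat match goal with
 | H : In _ (filter _ _) |- _ => apply filter_In in H; destruct H as [H ?Hn]
 | H : negb (Nat.eqb _ _) = true |- _ => apply Bool.negb_true_iff, Nat.eqb_neq in H
 | H : In _ (_ ++ _) |- _ => apply in_app_or in H; destruct H as [H|H]
 | H : In _ (_ :: _) |- _ => destruct H as [H|H]
 | H : In _ [] |- _ => destruct H
 end.

Lemma fv_Mform k x1 x2 x3 L x : In x (fv_form (Mform k x1 x2 x3 L)) ->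
  x = x1 \/ x = x2 \/ x = x3 \/ x = k \/ x = k+1.
Proof.
  unfold Mform, comm, gm, gv. cbn [fv_form fv_term]. intros H. fvsolve;
  subst; first [tauto | exfalso; congruence].
Qed.

Lemma fv_Dform k v L x : In x (fv_form (Dform k v L)) -> x = v \/ x = k \/ x = k+1.
Proof.
  unfold Dform, comm, gm, gv. cbn [fv_form fv_term]. intros H. fvsolve;
  try (apply fv_Mform in H; destruct H as [H|[H|[H|[H|H]]]]);
  subst; first [tauto | exfalso; congruence].
Qed.

Lemma fv_TT t : forall k o L x, In x (fv_form (TT k t o L)) ->
  x = o \/ x = k \/ x = k+1 \/ exists i, In i (fv_term t) /\ x = sg k i.
Proof.
  induction t as [i|f t1 IH1 t2 IH2]; intros k o L x H.
  - unfold gm, gv in H; cbn [fv_form fv_term app] in H. destruct H as [H|[H|[]]]; subst; [tauto|]. right; right; right. exists i. simpl; auto.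
  - cbn [TT fv_form] in H. fvsolve.
    + apply IH1 in H. destruct H as [H|[H|[H|(j&Hj&H)]]]; subst; try tauto; try (exfalso; congruence).
      right; right; right. exists j. simpl. rewrite in_app_iff. auto.
    + apply IH2 in H. destruct H as [H|[H|[H|(j&Hj&H)]]]; subst; try tauto; try (exfalso; congruence).
      right; right; right. exists j. simpl. rewrite in_app_iff. auto.
    + destruct f.
      * unfold gm, gv in H; cbn [fv_form fv_term app] in H. fvsolve; subst; first [tauto | exfalso; congruence].
      * apply fv_Mform in H. destruct H as [H|[H|[H|[H|H]]]]; subst; first [tauto | exfalso; congruence].
Qed.

Lemma fv_T phi : forall k x, In x (fv_form (T k phi)) ->
  x = k \/ x = k+1 \/ exists i, In i (fv_form phi) /\ x = sg k i.
Proof.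
  induction phi as [t1 t2|p IH|p IHp q IHq|i p IH]; intros k x H.
  - cbn [T fv_form] in H. unfold gm, gv in H. cbn [fv_term app] in H. fvsolve;
    [ apply fv_TT in H; destruct H as [H|[H|[H|(j&Hj&H)]]]; subst; try tauto; try (exfalso; congruence);
      right; right; exists j; simpl; rewrite in_app_iff; auto
    | apply fv_TT in H; destruct H as [H|[H|[H|(j&Hj&H)]]]; subst; try tauto; try (exfalso; congruence);
      right; right; exists j; simpl; rewrite in_app_iff; auto
    | subst; exfalso; congruence | subst; exfalso; congruence ].
  - cbn [T fv_form] in H. auto.
  - cbn [T fv_form] in H. apply in_app_or in H. destruct H as [H|H].
    + apply IHp in H. destruct H as [H|[H|(j&Hj&H)]]; auto. right; right. exists j. simpl. rewrite in_app_iff. auto.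
    + apply IHq in H. destruct H as [H|[H|(j&Hj&H)]]; auto. right; right. exists j. simpl. rewrite in_app_iff. auto.
  - cbn [T fv_form] in H. fvsolve.
    + apply fv_Dform in H. destruct H as [H|[H|H]]; subst; try tauto; exfalso; congruence.
    + apply IH in H. destruct H as [H|[H|(j&Hj&H)]]; auto. right; right. exists j. split; auto.
      cbn [fv_form]. apply filter_In. split; auto. apply Bool.negb_true_iff, Nat.eqb_neq.
      intros ->. subst. congruence.
Qed.

Definition TrueF : form grp_sym := FEq (gv 0) (gv 0).
Fixpoint DomAll (k n : nat) : form grp_sym :=
  match n with O => TrueF | S n' => FAnd (Dform k n' 0) (DomAll k n') end.

Lemma DomAll_sem k n (eta : nat -> WZ) : n <= k -> eta k = wa -> eta (k+1) = wb ->
  (sat grp_op eta (DomAll k n) <-> forall i, i < n -> exists m : nat, eta i = apowZ (Z.of_nat m)).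
Proof.
  intros Hn HA HB. induction n as [|n IH].
  - cbn. split; [intros _ i Hi; lia|reflexivity].
  - cbn [DomAll sat]. rewrite Dform_sem by (auto; intros; unfold ax; lia).
    rewrite IH by lia. split.
    + intros [H1 H2] i Hi. destruct (Nat.eq_dec i n) as [->|]; auto. apply H2; lia.
    + intros H. split; [apply H; lia|]. intros i Hi; apply H; lia.
Qed.

Lemma fv_DomAll k n x : In x (fv_form (DomAll k n)) -> x < n \/ x = 0 \/ x = k \/ x = k+1.
Proof.
  induction n as [|n IH]; intros H.
  - unfold TrueF, gv in H. cbn in H. lia.
  - cbn [DomAll fv_form] in H. apply in_app_or in H. destruct H as [H|H].
    + apply fv_Dform in H. lia.
    + apply IH in H. lia.
Qed.

Lemma chunks1 {A} (ys : list A) : chunks 1 (length ys) ys = map (fun y => [y]) ys.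
Proof. induction ys as [|y ys IH]; [reflexivity|]. cbn. f_equal. exact IH. Qed.

Theorem lemma5p1 :
  is_interpretation arith_op 0 grp_op wone 1 dom_apow f_apow.
Proof.
  split.
  - intros m. exists [wpow wa m]. split; [reflexivity|]. split; [exists m; reflexivity|].
    unfold f_apow; simpl. rewrite wpow_wa. simpl. apply Nat2Z.id.
  - intros k X (phi & Hfv & HX). exists (FAnd (DomAll k k) (T k phi)), [wa; wb]. split.
    + intros x H. cbn [fv_form] in H. apply in_app_or in H. simpl length. destruct H as [H|H].
      * apply fv_DomAll in H. lia.
      * apply fv_T in H. destruct H as [H|[H|(i&Hi&H)]]; [lia|lia|].
        apply Hfv in Hi. rewrite sg_lt in H by lia. lia.
    + intros ys Hlen. rewrite Nat.mul_1_l in Hlen. subst k.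
      rewrite chunks1. set (k := length ys).
      set (eta := list_env wone (ys ++ [wa; wb])).
      assert (HA : eta k = wa).
      { unfold eta, list_env. rewrite app_nth2 by lia. rewrite Nat.sub_diag. reflexivity. }
      assert (HB : eta (k+1) = wb).
      { unfold eta, list_env. rewrite app_nth2 by lia. replace (k + 1 - length ys) with 1 by lia. reflexivity. }
      assert (Hlt : forall i, i < k -> eta i = nth i ys wone).
      { intros i Hi. unfold eta, list_env. apply app_nth1. lia. }
      set (rho := list_env 0 (map f_apow (map (fun y => [y]) ys))).
      assert (HI : (forall i, i < k -> exists m : nat, eta i = apowZ (Z.of_nat m)) -> Inv k rho eta).
      { intros HD. split; [|split; auto]. intros i. destruct (Nat.ltb_spec i k).
        - rewrite sg_lt by lia. destruct (HD i H) as (m & Hm). rewrite Hm. do 2 f_equal.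
          unfold rho, list_env. rewrite map_map.
          rewrite nth_indep with (d' := f_apow [wone]) by (rewrite length_map; lia).
          rewrite (map_nth (fun x => f_apow [x]) ys wone i). cbv beta. unfold f_apow. simpl. rewrite <- Hlt by lia. rewrite Hm. simpl. rewrite Nat2Z.id. reflexivity.
        - unfold sg. destruct (Nat.ltb_spec i k); [lia|].
          unfold eta, rho, list_env. rewrite !nth_overflow; [reflexivity| |].
          + rewrite !length_map. lia.
          + rewrite length_app. simpl. lia. }
      split.
      * intros (HF & HXs).
        assert (HD : forall i, i < k -> exists m : nat, eta i = apowZ (Z.of_nat m)).
        { intros i Hi. rewrite Forall_forall in HF.
          destruct (HF [nth i ys wone]) as (m & Hm).
          - apply in_map_iff. exists (nth i ys wone). split; auto. apply nth_In. lia.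
          - exists m. rewrite Hlt by lia. injection Hm as Hm. rewrite Hm. apply wpow_wa. }
        cbn [sat]. split.
        -- apply DomAll_sem; auto.
        -- apply (proj1 (T_sem phi k rho eta (HI HD))). apply HX; [rewrite !length_map; reflexivity|exact HXs].
      * cbn [sat]. intros (HDa & HT).
        pose proof (proj1 (DomAll_sem k k eta (le_n k) HA HB) HDa) as HD. clear HDa. rename HD into HDa.
        split.
        -- rewrite Forall_forall. intros l Hl. apply in_map_iff in Hl as (y & <- & Hy).
           apply (In_nth ys y wone) in Hy as (i & Hi & <-).
           destruct (HDa i Hi) as (m & Hm). exists m. rewrite <- Hlt by lia. rewrite Hm, wpow_wa. reflexivity.
        -- apply HX; [rewrite !length_map; reflexivity|]. apply (proj2 (T_sem phi k rho eta (HI HDa))). exact HT.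
Qed.
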